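(* Fix $\kappa>0$ and $x_0\in\mathbb R^2$. Let $m\in\mathbb Z\setminus\{0\}$, $\Phi(\alpha):=-m\,\vec\alpha\cdot x_0$, $I=[a,b]\subset[-\pi,\pi]$, $l\in\mathbb Z$, and $g\in C^1(I)$. Suppose (1) $\Phi''(\alpha)\ne0$ for $\alpha\in(a,b)$; (2) there is $\alpha_0\in I$ with $\kappa\Phi'(\alpha_0)=l$ and $\Phi''(\alpha_0)\neq0$; (3) $|\kappa\Phi'(\alpha)-l|\le1/2$ for all $\alpha\in I$. Then for every $\epsilon>0$, $$\Bigl|\int_I g(\alpha)h_l(\alpha)\,e\Bigl(\frac{\Phi_l(\alpha)}{\epsilon}\Bigr)d\alpha\Bigr|\le c\,\epsilon^{1/2}\Bigl[\max_{I}|g|+\int_I|g'(\alpha)|\,d\alpha\Bigr]\,|\Phi''(\alpha_0)|^{-1/2},$$ where $c$ depends only on $\kappa$ and $x_0$ (it is independent of $g$, $m$, $\epsilon$, $l$ and $I$).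
   Context: $\vec\alpha=(\cos\alpha,\sin\alpha)$, $e(r):=\exp(2\pi ir)$. For the given $\Phi$ and $l$: $\Phi_l(\alpha):=\Phi(\alpha)-(l/\kappa)\alpha$, and $h_l(\alpha):=\dfrac{\pi\kappa\Phi_l'(\alpha)}{\sin(\pi\kappa\Phi_l'(\alpha))}$ if $\Phi_l'(\alpha)\neq0$, $h_l(\alpha):=1$ if $\Phi_l'(\alpha)=0$ (note $\kappa\Phi_l'=\kappa\Phi'-l\in[-1/2,1/2]$ on $I$). *)

(* Defs.v *)
From Stdlib Require Import Reals.
From Coquelicot Require Import Coquelicot.
Open Scope R_scope.

Definition e (r : R) : C := (cos (2 * PI * r), sin (2 * PI * r)).

Definition CInt (f : R -> C) (a b : R) : C :=
  (RInt (fun t => fst (f t)) a b, RInt (fun t => snd (f t)) a b).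

Definition dotdir (x0 : R * R) (alpha : R) : R :=
  cos alpha * fst x0 + sin alpha * snd x0.

Definition Phi (m : Z) (x0 : R * R) (alpha : R) : R := - IZR m * dotdir x0 alpha.

Definition Phi_l (kappa : R) (m : Z) (x0 : R * R) (l : Z) (alpha : R) : R :=
  Phi m x0 alpha - (IZR l / kappa) * alpha.

Definition h_l (kappa : R) (m : Z) (x0 : R * R) (l : Z) (alpha : R) : R :=
  let d := Derive (Phi_l kappa m x0 l) alpha in
  if Req_EM_T d 0 then 1 else (PI * kappa * d) / sin (PI * kappa * d).

Definition C1_on_with (g g' : R -> R) (a b : R) : Prop :=
  forall x, a <= x <= b ->
    filterdiff g (within (fun y => a <= y <= b) (locally x)) (fun h => scal h (g' x)) /\
    filterlim g' (within (fun y => a <= y <= b) (locally x)) (locally (g' x)).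

(* Main.v *)
Require Import Defs.
From Stdlib Require Import Reals Lra Psatz.
From Stdlib Require Classical_Prop.
From Coquelicot Require Import Coquelicot.
Open Scope R_scope.

Definition P1 (m : Z) (x0 : R*R) (t : R) := IZR m * (fst x0 * sin t - snd x0 * cos t).
Definition F2 (m : Z) (x0 : R*R) (t : R) := IZR m * (fst x0 * cos t + snd x0 * sin t).

Lemma is_derive_Phi m x0 t : is_derive (Phi m x0) t (P1 m x0 t).
Proof. unfold Phi, dotdir, P1. auto_derive; auto. ring. Qed.

Lemma dPhi m x0 t : Derive (Phi m x0) t = P1 m x0 t.
Proof. apply is_derive_unique, is_derive_Phi. Qed.

Lemma is_derive_P1 m x0 t : is_derive (P1 m x0) t (F2 m x0 t).
Proof. unfold P1, F2. auto_derive; auto. ring. Qed.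

Lemma ddPhi m x0 t : Derive (Derive (Phi m x0)) t = F2 m x0 t.
Proof. rewrite (Derive_ext _ (P1 m x0)). apply is_derive_unique, is_derive_P1. apply dPhi. Qed.

Lemma is_derive_F2 m x0 t : is_derive (F2 m x0) t (- P1 m x0 t).
Proof. unfold P1, F2. auto_derive; auto. ring. Qed.

Lemma dPhil k m x0 l t : Derive (Phi_l k m x0 l) t = P1 m x0 t - IZR l / k.
Proof. apply is_derive_unique. unfold Phi_l.
  evar (z:R). replace (P1 m x0 t - IZR l / k) with z.
  apply @is_derive_minus. apply is_derive_Phi.
  2: { unfold z. reflexivity. }
  auto_derive; auto. unfold z. ring. Qed.

Lemma PI2_le : PI / 2 <= 7/4.
Proof. pose proof pi2_int. unfold PI. lra. Qed.

Lemma sin_lb_eq a : sin_lb a = a - a^3/6 + a^5/120 - a^7/5040.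
Proof. unfold sin_lb, sin_approx, sin_term. simpl. field. Qed.

Lemma T1 y : 0 <= y <= PI/2 -> y/2 <= sin y.
Proof. intros [H1 H2]. pose proof PI2_le. pose proof PI_RGT_0.
  destruct (SIN y) as [S _]; try lra. rewrite sin_lb_eq in S.
  assert (z : y^2 <= 49/16) by nra.
  assert (0 <= 1/2 - y^2/6 + y^4/120 - y^6/5040) by nra.
  nra. Qed.

Lemma T2 y : Rabs y <= PI/2 -> Rabs y / 2 <= Rabs (sin y).
Proof. intro H. destruct (Rle_or_lt 0 y).
  - rewrite !Rabs_right in *; try lra. pose proof (T1 y); lra. 
    pose proof (T1 y). lra.
  - rewrite Rabs_left in H by lra. pose proof (T1 (-y)). rewrite sin_neg in H1.
    rewrite Rabs_left by lra. rewrite Rabs_left. lra. lra. Qed.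

Lemma T3p y : 0 <= y <= 4 -> 0 <= y - sin y <= y^3/6.
Proof. intros [H1 H2]. destruct (pre_sin_bound y 0 H1 H2) as [A B].
  unfold sin_approx, sin_term in A, B. simpl in A, B.
  destruct (Req_dec y 0). subst. rewrite sin_0. lra.
  pose proof (sin_lt_x y). nra. Qed.

Lemma T3 y : Rabs y <= 4 -> Rabs (y - sin y) <= Rabs y ^ 3 / 6.
Proof. intro H. destruct (Rle_or_lt 0 y).
  - rewrite Rabs_right in H by lra. rewrite (Rabs_right y) by lra.
    pose proof (T3p y). rewrite Rabs_right; lra.
  - rewrite Rabs_left in H by lra. rewrite (Rabs_left y) by lra.
    pose proof (T3p (-y)). rewrite sin_neg in H1.
    rewrite Rabs_left1. lra. nra. Qed.

Definition Hf (x : R) : R := if Req_EM_T x 0 then 1 else x / sin x.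

Lemma sin_nz x : 0 < Rabs x < PI -> sin x <> 0.
Proof. intros [H1 H2]. destruct (Rle_or_lt 0 x).
  rewrite Rabs_right in * by lra. pose proof (sin_gt_0 x). lra.
  rewrite Rabs_left in * by lra. pose proof (sin_lt_0_var x). lra. Qed.

Lemma Hf_bound x : Rabs x <= PI/2 -> Rabs (Hf x) <= 2.
Proof. intro H. unfold Hf. destruct Req_EM_T. rewrite Rabs_R1; lra.
  pose proof (T2 x H). assert (0 < Rabs x) by (apply Rabs_pos_lt; auto).
  unfold Rdiv. rewrite Rabs_mult, Rabs_inv.
  apply Rmult_le_reg_r with (Rabs (sin x)). lra.
  rewrite Rmult_assoc, Rinv_l by lra. lra. Qed.

Lemma Hf_cont x : Rabs x < PI -> continuous Hf x.
Proof. intro H. destruct (Req_dec x 0).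
  - subst. apply continuity_pt_filterlim. intros eps Heps.
    exists (Rmin 1 eps). split. apply Rmin_pos; lra.
    intros y [_ Hy]. simpl in *. unfold Rdist in *. unfold Hf.
    try rewrite Rminus_0_r in Hy.
    destruct (Req_EM_T y 0); destruct (Req_EM_T 0 0); try congruence.
    rewrite Rminus_diag, Rabs_R0; lra.
    assert (Hy1 : Rabs y < 1) by (pose proof (Rmin_l 1 eps); lra).
    assert (Hy2 : Rabs y < eps) by (pose proof (Rmin_r 1 eps); lra).
    pose proof PI2_le. pose proof PI2_1.
    assert (Hs := T2 y ltac:(lra)). assert (Ht := T3 y ltac:(lra)).
    assert (0 < Rabs y) by (apply Rabs_pos_lt; auto).
    replace (y / sin y - 1) with ((y - sin y) / sin y).
    2:{ field. apply sin_nz; lra. }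
    unfold Rdiv. rewrite Rabs_mult, Rabs_inv.
    apply Rle_lt_trans with (Rabs y ^ 3 / 6 * / (Rabs y / 2)).
    apply Rmult_le_compat; try apply Rabs_pos. left; apply Rinv_0_lt_compat; apply Rabs_pos_lt; apply sin_nz; lra.
    lra. apply Rinv_le_contravar; lra.
    replace (Rabs y ^ 3 / 6 * / (Rabs y / 2)) with (Rabs y * Rabs y / 3) by (field; lra).
    nra.
  - assert (Hs : sin x <> 0) by (apply sin_nz; split; [apply Rabs_pos_lt|]; auto).
    apply continuous_ext_loc with (g := fun y => y / sin y).
    + assert (Hp : 0 < Rabs x) by (apply Rabs_pos_lt; auto).
      exists (mkposreal _ Hp). intros y Hy. unfold Hf.
      destruct (Req_EM_T y 0); [|reflexivity]. subst y. exfalso.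
      unfold ball in Hy; simpl in Hy. unfold AbsRing_ball, abs, minus, plus, opp in Hy; simpl in Hy.
      rewrite Rplus_0_l, Rabs_Ropp in Hy. lra.
    + apply (ex_derive_continuous (fun y => y / sin y)). auto_derive. auto.
Qed.

Lemma loc_ex (x : R) (P : R -> Prop) : locally x P -> exists d, 0 < d /\ forall y, Rabs (y - x) < d -> P y.
Proof. intros [eps H]. exists eps. split. apply cond_pos. intros y Hy. apply H. exact Hy. Qed.

Lemma ex_loc (x : R) (P : R -> Prop) d : 0 < d -> (forall y, Rabs (y - x) < d -> P y) -> locally x P.
Proof. intros Hd H. exists (mkposreal d Hd). intros y Hy. apply H. exact Hy. Qed.

Lemma within_cont_ex (f : R -> R) (D : R -> Prop) x :
  filterlim f (within D (locally x)) (locally (f x)) ->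
  forall eps, 0 < eps -> exists d, 0 < d /\ forall y, Rabs (y - x) < d -> D y -> Rabs (f y - f x) < eps.
Proof. intros H eps He.
  assert (L : locally (f x) (fun z => Rabs (z - f x) < eps)) by (apply (ex_loc _ _ eps); auto).
  specialize (H _ L). apply loc_ex in H. exact H. Qed.

Lemma cont_ex (f : R -> R) x : continuous f x ->
  forall eps, 0 < eps -> exists d, 0 < d /\ forall y, Rabs (y - x) < d -> Rabs (f y - f x) < eps.
Proof. intros H eps He.
  assert (L : locally (f x) (fun z => Rabs (z - f x) < eps)) by (apply (ex_loc _ _ eps); auto).
  specialize (H _ L). apply loc_ex in H. exact H. Qed.

Lemma ex_cont (f : R -> R) x : 
  (forall eps, 0 < eps -> exists d, 0 < d /\ forall y, Rabs (y - x) < d -> Rabs (f y - f x) < eps) -> continuous f x.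
Proof. intros H P [eps HP]. destruct (H eps (cond_pos eps)) as [d [Hd Hy]].
  apply (ex_loc _ _ d Hd). intros y Hy'. apply HP. apply Hy. auto. Qed.

Lemma within_diff_ex (g g' : R -> R) (D : R -> Prop) x :
  filterdiff g (within D (locally x)) (fun h => scal h (g' x)) ->
  forall eps, 0 < eps -> exists d, 0 < d /\ forall y, Rabs (y - x) < d -> D y ->
     Rabs (g y - g x - (y - x) * g' x) <= eps * Rabs (y - x).
Proof. intros [_ H] eps He.
  assert (Hl : is_filter_lim (within D (locally x)) x).
  { intros P HP. unfold within. destruct HP as [e HP]. exists e. intros; auto. }
  specialize (H x Hl (mkposreal eps He)). apply loc_ex in H. exact H. Qed.

Ltac rabs := repeat match goal with |- context [Rabs ?z] => let H := fresh in
  destruct (Rle_or_lt 0 z) as [H|H]; [rewrite (Rabs_right z) by lra | rewrite (Rabs_left z) by lra] end.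

Definition clamp (a b x : R) := Rmax a (Rmin b x).

Lemma clamp_in a b x : a <= b -> a <= clamp a b x <= b.
Proof. intros. unfold clamp, Rmax, Rmin. repeat destruct Rle_dec; lra. Qed.
Lemma clamp_id a b x : a <= x <= b -> clamp a b x = x.
Proof. intros. unfold clamp, Rmax, Rmin. repeat destruct Rle_dec; lra. Qed.
Lemma clamp_lip a b x y : a <= b -> Rabs (clamp a b x - clamp a b y) <= Rabs (x - y).
Proof. intros. unfold clamp, Rmax, Rmin. repeat destruct Rle_dec; 
  rabs; lra. Qed.
Lemma clamp_dist a b x z : a <= z <= b -> Rabs (x - clamp a b x) <= Rabs (x - z).
Proof. intros. unfold clamp, Rmax, Rmin. repeat destruct Rle_dec; 
  rabs; lra. Qed.

Lemma clamp_cont_within (f : R -> R) a b : a <= b ->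
  (forall x, a <= x <= b -> filterlim f (within (fun y => a <= y <= b) (locally x)) (locally (f x))) ->
  forall y, continuous (fun t => f (clamp a b t)) y.
Proof. intros Hab H y. apply ex_cont. intros eps He.
  destruct (within_cont_ex _ _ _ (H _ (clamp_in a b y Hab)) eps He) as [d [Hd Hy]].
  exists d. split; auto. intros t Ht. apply Hy. pose proof (clamp_lip a b t y Hab). lra.
  apply clamp_in; auto. Qed.

Lemma clamp_cont (f : R -> R) a b : a <= b ->
  (forall x, a <= x <= b -> continuous f x) -> forall y, continuous (fun t => f (clamp a b t)) y.
Proof. intros Hab H y. apply ex_cont. intros eps He.
  destruct (cont_ex _ _ (H _ (clamp_in a b y Hab)) eps He) as [d [Hd Hy]].
  exists d. split; auto. intros t Ht. apply Hy. pose proof (clamp_lip a b t y Hab). lra. Qed.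

Definition gext (g g' : R -> R) a b x := g (clamp a b x) + g' (clamp a b x) * (x - clamp a b x).

Lemma gext_deriv g g' a b : a < b -> C1_on_with g g' a b ->
  forall x, is_derive (gext g g' a b) x (g' (clamp a b x)).
Proof. intros Hab HC x. apply is_derive_Reals. intros eps He.
  destruct (Rlt_or_le x a) as [Hxa|Hxa].
  { assert (Hd : 0 < a - x) by lra. exists (mkposreal _ Hd). intros h Hh Hlt. simpl in Hlt.
    unfold gext. assert (E1 : clamp a b (x+h) = a) by (unfold clamp, Rmax, Rmin; repeat destruct Rle_dec; rabs; try lra; apply Rabs_def2 in Hlt; lra).
    assert (E2 : clamp a b x = a) by (unfold clamp, Rmax, Rmin; repeat destruct Rle_dec; lra).
    rewrite E1, E2. replace ((g a + g' a * (x + h - a) - (g a + g' a * (x - a))) / h - g' a) with 0 by (field; auto).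
    rewrite Rabs_R0; lra. }
  destruct (Rlt_or_le b x) as [Hxb|Hxb].
  { assert (Hd : 0 < x - b) by lra. exists (mkposreal _ Hd). intros h Hh Hlt. simpl in Hlt.
    apply Rabs_def2 in Hlt.
    unfold gext. assert (E1 : clamp a b (x+h) = b) by (unfold clamp, Rmax, Rmin; repeat destruct Rle_dec; lra).
    assert (E2 : clamp a b x = b) by (unfold clamp, Rmax, Rmin; repeat destruct Rle_dec; lra).
    rewrite E1, E2. replace ((g b + g' b * (x + h - b) - (g b + g' b * (x - b))) / h - g' b) with 0 by (field; auto).
    rewrite Rabs_R0; lra. }
  destruct (HC x (conj Hxa Hxb)) as [Hdiff Hcont].
  destruct (within_diff_ex _ _ _ _ Hdiff (eps/4) ltac:(lra)) as [d1 [Hd1 H1]].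
  destruct (within_cont_ex _ _ _ Hcont (eps/4) ltac:(lra)) as [d2 [Hd2 H2]].
  assert (Hd : 0 < Rmin d1 d2) by (apply Rmin_pos; auto).
  exists (mkposreal _ Hd). intros h Hh Hlt. simpl in Hlt.
  pose proof (Rmin_l d1 d2). pose proof (Rmin_r d1 d2).
  set (c := clamp a b (x + h)).
  assert (Ex : clamp a b x = x) by (apply clamp_id; lra).
  assert (Hc : Rabs (c - x) <= Rabs h).
  { pose proof (clamp_lip a b (x+h) x ltac:(lra)). rewrite Ex in H3. 
    replace (x + h - x) with h in H3 by ring. exact H3. }
  assert (Hcin : a <= c <= b) by (apply clamp_in; lra).
  assert (Hyc : Rabs (x + h - c) <= Rabs h).
  { pose proof (clamp_dist a b (x+h) x ltac:(lra)). replace (x + h - x) with h in H3 by ring. exact H3. }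
  assert (A := H1 c ltac:(lra) Hcin). assert (B := H2 c ltac:(lra) Hcin).
  assert (Hh0 : 0 < Rabs h) by (apply Rabs_pos_lt; auto).
  unfold gext. rewrite Ex. fold c.
  replace ((g c + g' c * (x + h - c) - (g x + g' x * (x - x))) / h - g' x)
    with (((g c - g x - (c - x) * g' x) + (g' c - g' x) * (x + h - c)) / h) by (field; auto).
  unfold Rdiv. rewrite Rabs_mult, Rabs_inv.
  apply Rmult_lt_reg_r with (Rabs h); auto.
  rewrite Rmult_assoc, Rinv_l by lra.
  eapply Rle_lt_trans. rewrite Rmult_1_r. apply Rabs_triang.
  rewrite Rabs_mult.
  assert (Rabs (g' c - g' x) * Rabs (x + h - c) <= eps/4 * Rabs h).
  { apply Rmult_le_compat; try apply Rabs_pos; lra. }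
  nra. Qed.

Lemma exRc (f : R -> R) a b : (forall z, Rmin a b <= z <= Rmax a b -> continuous f z) -> ex_RInt f a b.
Proof. intro H. apply (ex_RInt_continuous (V := R_CompleteNormedModule)). exact H. Qed.

Lemma RIext (f g : R -> R) a b : (forall x, Rmin a b < x < Rmax a b -> f x = g x) -> RInt f a b = RInt g a b.
Proof. intro H. apply (RInt_ext (V:=R_CompleteNormedModule)). exact H. Qed.

Lemma ibp_bound a b (g g' f : R -> R) K M : a < b -> C1_on_with g g' a b ->
  (forall x, a <= x <= b -> continuous f x) ->
  (forall x, a <= x <= b -> Rabs (g x) <= M) ->
  (forall t, a <= t <= b -> Rabs (RInt f t b) <= K) ->
  Rabs (RInt (fun x => g x * f x) a b) <= K * (M + RInt (fun x => Rabs (g' x)) a b).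
Proof. intros Hab HC Hf Hg HK.
  set (fh := fun t => f (clamp a b t)).
  set (gh := gext g g' a b).
  set (gp := fun t => g' (clamp a b t)).
  assert (Cfh : forall t, continuous fh t) by (apply clamp_cont; auto; lra).
  assert (Cgp : forall t, continuous gp t).
  { apply clamp_cont_within. lra. intros x Hx. apply (HC x Hx). }
  assert (Dgh : forall t, is_derive gh t (gp t)) by (intro; apply gext_deriv; auto).
  assert (Cgh : forall t, continuous gh t) by (intro t; apply (ex_derive_continuous gh); eexists; apply Dgh).
  assert (Exfh : forall u v, ex_RInt fh u v) by (intros; apply exRc; auto).
  set (Bc := fun t => RInt fh t b).
  assert (DBc : forall t, is_derive Bc t (- fh t)).
  { intro t. apply (is_derive_RInt' fh Bc t b). apply (ex_loc _ _ 1). lra. intros; unfold Bc; apply (RInt_correct (V:=R_CompleteNormedModule)); auto. auto. }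
  assert (CBc : forall t, continuous Bc t) by (intro t; apply (ex_derive_continuous Bc); eexists; apply DBc).
  set (P := fun t => gh t * Bc t).
  assert (DP : forall t, is_derive P t (gp t * Bc t + gh t * (- fh t))).
  { intro t. apply (is_derive_mult gh Bc). apply Dgh. apply DBc. intros; apply Rmult_comm. }
  assert (CP : forall t, continuous (fun t => gp t * Bc t + gh t * (- fh t)) t).
  { intro t. apply (continuous_plus (fun t => gp t * Bc t) (fun t => gh t * (- fh t))).
    apply (continuous_mult gp Bc); auto. apply (continuous_mult gh (fun t => - fh t)); auto.
    apply (continuous_opp fh); auto. }
  assert (I1 := is_RInt_derive P _ a b (fun x _ => DP x) (fun x _ => CP x)).
  assert (Ex1 : ex_RInt (fun t => gp t * Bc t) a b).
  { apply exRc. intros. apply (continuous_mult gp Bc); auto. }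
  assert (Ex2 : ex_RInt (fun t => gh t * fh t) a b).
  { apply exRc. intros. apply (continuous_mult gh fh); auto. }
  assert (E : RInt (fun t => gh t * fh t) a b = P a - P b + RInt (fun t => gp t * Bc t) a b).
  { assert (I2 : is_RInt (fun t => gp t * Bc t + gh t * (- fh t)) a b
        (RInt (fun t => gp t * Bc t) a b - RInt (fun t => gh t * fh t) a b)).
    { eapply is_RInt_ext. 2: apply (is_RInt_minus _ _ _ _ _ _ (RInt_correct _ _ _ Ex1) (RInt_correct _ _ _ Ex2)).
      intros; unfold minus, plus, opp; simpl; ring. }
    apply (is_RInt_unique (V:=R_CompleteNormedModule)) in I1. apply (is_RInt_unique (V:=R_CompleteNormedModule)) in I2. rewrite I1 in I2.
    unfold minus, plus, opp in I2; simpl in I2. lra. }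
  assert (Pb : P b = 0) by (unfold P, Bc; rewrite RInt_point; unfold zero; simpl; ring).
  assert (Pa : P a = g a * RInt f a b).
  { unfold P, Bc, gh, gext, fh. rewrite clamp_id by lra. f_equal. ring.
    apply RInt_ext. intros x Hx. rewrite Rmin_left in Hx by lra. rewrite Rmax_right in Hx by lra.
    rewrite clamp_id; auto; lra. }
  rewrite (RInt_ext _ (fun t => gh t * fh t)).
  2:{ intros x Hx. rewrite Rmin_left in Hx by lra. rewrite Rmax_right in Hx by lra.
      unfold gh, fh, gext. rewrite clamp_id by lra. rewrite Rminus_diag, Rmult_0_r, Rplus_0_r; reflexivity. }
  assert (HK0 : 0 <= K) by (eapply Rle_trans; [apply Rabs_pos|apply (HK b); lra]).
  rewrite E, Pb, Pa.
  assert (Hg1 : Rabs (g a * RInt f a b) <= M * K).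
  { rewrite Rabs_mult. apply Rmult_le_compat; try apply Rabs_pos. apply Hg; lra. apply HK; lra. }
  assert (Ex3 : ex_RInt (fun t => Rabs (gp t)) a b).
  { apply exRc. intros. apply (continuous_comp gp Rabs). apply Cgp. apply continuous_Rabs. }
  assert (Ex4 : ex_RInt (fun t => gp t * Bc t) a b) by exact Ex1.
  assert (Hg2 : Rabs (RInt (fun t => gp t * Bc t) a b) <= K * RInt (fun x => Rabs (g' x)) a b).
  { eapply Rle_trans. apply abs_RInt_le. lra. exact Ex4.
    rewrite (RInt_ext (fun x => Rabs (g' x)) (fun t => Rabs (gp t))).
    2:{ intros x Hx. rewrite Rmin_left in Hx by lra. rewrite Rmax_right in Hx by lra.
      unfold gp. rewrite clamp_id by lra. reflexivity. }
    rewrite <- (RInt_scal (fun t => Rabs (gp t))). 2: exact Ex3. apply RInt_le. lra.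
    apply exRc. intros. apply (continuous_comp _ Rabs). apply (continuous_mult gp Bc). apply Cgp. apply CBc. apply continuous_Rabs.
    apply (ex_RInt_scal (V:=R_CompleteNormedModule)). exact Ex3.
    intros x Hx. unfold scal; simpl; unfold mult; simpl. rewrite Rabs_mult.
    rewrite Rmult_comm. apply Rmult_le_compat_r. apply Rabs_pos.
    unfold Bc. rewrite <- (RInt_ext f). apply HK; lra.
    intros y Hy. rewrite Rmin_left in Hy by lra. rewrite Rmax_right in Hy by lra.
      unfold fh. rewrite clamp_id by lra. reflexivity. }
  replace (g a * RInt f a b - 0 + RInt (fun t => gp t * Bc t) a b) with (g a * RInt f a b + RInt (fun t => gp t * Bc t) a b) by ring.
  eapply Rle_trans. apply Rabs_triang. lra. Qed.

Definition Dl k m x0 l t := P1 m x0 t - IZR l / k.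

Lemma is_derive_Phil k m x0 l t : is_derive (Phi_l k m x0 l) t (Dl k m x0 l t).
Proof. unfold Phi_l, Dl. apply (is_derive_minus (Phi m x0) (fun t => IZR l / k * t)).
  apply is_derive_Phi. evar (z:R). replace (IZR l / k) with z. auto_derive; auto. unfold z. ring. unfold z; reflexivity. Qed.

Lemma is_derive_Dl k m x0 l t : is_derive (Dl k m x0 l) t (F2 m x0 t).
Proof. unfold Dl. evar (z:R). replace (F2 m x0 t) with z.
  apply (is_derive_minus (P1 m x0) (fun _ => IZR l / k)). apply is_derive_P1. apply is_derive_const.
  unfold z, minus, plus, opp, zero; simpl. ring. Qed.

Lemma h_eq k m x0 l t : 0 < k -> h_l k m x0 l t = Hf (PI * k * Dl k m x0 l t).
Proof. intro Hk. unfold h_l, Hf. rewrite dPhil. fold (Dl k m x0 l t).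
  pose proof PI_RGT_0.
  destruct (Req_EM_T (Dl k m x0 l t) 0) as [E|E]; destruct (Req_EM_T (PI * k * Dl k m x0 l t) 0) as [E'|E']; auto.
  rewrite E in E'. lra. exfalso. apply E. apply Rmult_integral in E'. destruct E'; auto. nra. Qed.

Lemma F2_cont m x0 : continuity (F2 m x0).
Proof. intro t. apply continuity_pt_filterlim. apply (ex_derive_continuous (F2 m x0)).
  eexists. apply is_derive_F2. Qed.

Lemma sign_const m x0 a b : (forall t, a < t < b -> F2 m x0 t <> 0) ->
  (forall t, a <= t <= b -> 0 <= F2 m x0 t) \/ (forall t, a <= t <= b -> F2 m x0 t <= 0).
Proof. intro HF.
  destruct (Classical_Prop.classic (exists t, a <= t <= b /\ F2 m x0 t < 0)) as [[t1 [H1 H1']]|N1].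
  - right. intros t2 H2. destruct (Rle_or_lt (F2 m x0 t2) 0) as [|H2']; auto. exfalso.
    destruct (IVT_gen (F2 m x0) t1 t2 0 (F2_cont m x0)) as [z [Hz Hz']].
    { unfold Rmin, Rmax; destruct Rle_dec; lra. }
    assert (z <> t1) by (intro; subst; lra). assert (z <> t2) by (intro; subst; lra).
    apply (HF z); auto. unfold Rmin, Rmax in Hz; destruct Rle_dec; lra.
  - left. intros t Ht. destruct (Rle_or_lt 0 (F2 m x0 t)); auto. exfalso. apply N1. eauto. Qed.

Lemma PI_gt3 : 3 < PI.
Proof. pose proof PI2_3_2. lra. Qed.

Lemma Dl_lower k m x0 l a b al0 : 0 < k -> 
  - PI <= a -> b <= PI ->
  (forall t, a <= t <= b -> 0 <= F2 m x0 t) \/ (forall t, a <= t <= b -> F2 m x0 t <= 0) ->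
  a <= al0 <= b -> k * P1 m x0 al0 = IZR l -> F2 m x0 al0 <> 0 ->
  forall t, a <= t <= b -> Rabs (F2 m x0 al0) * Rabs (t - al0) / 4 <= Rabs (Dl k m x0 l t).
Proof. intros Hk Ha Hb Hs H0 Hl HF0 t Ht.
  set (mu := (t + al0) / 2). set (d := (t - al0) / 2).
  assert (Et : t = mu + d) by (unfold mu, d; field). assert (E0 : al0 = mu - d) by (unfold mu, d; field).
  assert (ED : Dl k m x0 l t = 2 * sin d * F2 m x0 mu).
  { unfold Dl. replace (IZR l / k) with (P1 m x0 al0) by (rewrite <- Hl; field; lra).
    unfold P1, F2. rewrite Et, E0. rewrite sin_plus, sin_minus, cos_plus, cos_minus. ring. }
  assert (EF : F2 m x0 t + F2 m x0 al0 = 2 * cos d * F2 m x0 mu).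
  { unfold F2. rewrite Et, E0. rewrite sin_plus, sin_minus, cos_plus, cos_minus. ring. }
  assert (Hmu : a <= mu <= b) by (unfold mu; lra).
  assert (Hd : Rabs d <= PI) by (unfold d; apply Rabs_le; split; lra).
  assert (Key : 0 < cos d /\ Rabs (F2 m x0 al0) <= 2 * Rabs (F2 m x0 mu)).
  { assert (Hc1 : cos d <= 1) by apply COS_bound.
    destruct Hs as [Hs|Hs].
    - assert (A1 := Hs t Ht). assert (A2 := Hs al0 H0). assert (A3 := Hs mu Hmu).
      assert (0 < F2 m x0 al0) by lra.
      rewrite (Rabs_right (F2 m x0 al0)), (Rabs_right (F2 m x0 mu)) by lra.
      destruct (Rle_or_lt (cos d) 0). nra. split; auto. nra.
    - assert (A1 := Hs t Ht). assert (A2 := Hs al0 H0). assert (A3 := Hs mu Hmu).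
      assert (F2 m x0 al0 < 0) by lra.
      rewrite (Rabs_left (F2 m x0 al0)), (Rabs_left1 (F2 m x0 mu)) by lra.
      destruct (Rle_or_lt (cos d) 0). nra. split; auto. nra. }
  destruct Key as [Hcd HFm].
  assert (Hd2 : Rabs d <= PI / 2).
  { destruct (Rle_or_lt (Rabs d) (PI/2)); auto. exfalso.
    assert (cos (Rabs d) <= 0) by (apply cos_le_0; lra).
    destruct (Rle_or_lt 0 d). rewrite Rabs_right in H1 by lra. lra.
    rewrite Rabs_left in H1 by lra. rewrite cos_neg in H1. lra. }
  assert (Hsd := T2 d Hd2).
  rewrite ED. rewrite !Rabs_mult. rewrite (Rabs_right 2) by lra.
  replace (Rabs (t - al0)) with (2 * Rabs d) by (unfold d; rewrite Rabs_div; [rewrite (Rabs_right 2); [field|lra]|lra]).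
  assert (0 <= Rabs d) by apply Rabs_pos. assert (0 <= Rabs (F2 m x0 al0)) by apply Rabs_pos.
  nra. Qed.

Lemma ibp (Q Q' S S' : R -> R) u v : u <= v ->
  (forall t, u <= t <= v -> is_derive Q t (Q' t)) ->
  (forall t, u <= t <= v -> is_derive S t (S' t)) ->
  (forall t, u <= t <= v -> continuous Q' t) ->
  (forall t, u <= t <= v -> continuous S' t) ->
  RInt (fun t => Q t * S' t) u v = Q v * S v - Q u * S u - RInt (fun t => Q' t * S t) u v.
Proof. intros Huv DQ DS CQ CS.
  assert (MM : forall t, Rmin u v <= t <= Rmax u v -> u <= t <= v).
  { intros t; rewrite Rmin_left, Rmax_right by lra; auto. }
  assert (CQ0 : forall t, u <= t <= v -> continuous Q t).
  { intros. apply (ex_derive_continuous Q). eexists; apply DQ; auto. }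
  assert (CS0 : forall t, u <= t <= v -> continuous S t).
  { intros. apply (ex_derive_continuous S). eexists; apply DS; auto. }
  assert (I1 : is_RInt (fun t => Q' t * S t + Q t * S' t) u v (Q v * S v - Q u * S u)).
  { apply (is_RInt_derive (fun t => Q t * S t)).
    - intros t Ht. apply MM in Ht. apply (is_derive_mult Q S); auto. intros; apply Rmult_comm.
    - intros t Ht. apply MM in Ht. apply (continuous_plus (fun t => Q' t * S t) (fun t => Q t * S' t)).
      apply (continuous_mult Q' S); auto. apply (continuous_mult Q S'); auto. }
  assert (Ex1 : ex_RInt (fun t => Q t * S' t) u v).
  { apply exRc. intros t Ht. apply MM in Ht. apply (continuous_mult Q S'); auto. }
  assert (Ex2 : ex_RInt (fun t => Q' t * S t) u v).
  { apply exRc. intros t Ht. apply MM in Ht. apply (continuous_mult Q' S); auto. }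
  assert (I2 : is_RInt (fun t => Q' t * S t + Q t * S' t) u v
        (RInt (fun t => Q' t * S t) u v + RInt (fun t => Q t * S' t) u v)).
  { apply (is_RInt_plus (V:=R_CompleteNormedModule)); apply (RInt_correct (V:=R_CompleteNormedModule)); auto. }
  apply (is_RInt_unique (V:=R_CompleteNormedModule)) in I1.
  apply (is_RInt_unique (V:=R_CompleteNormedModule)) in I2. rewrite I1 in I2. lra. Qed.

Lemma Rabs_le_inv_W x y : Rabs x <= y -> -y <= x <= y.
Proof. intro H. unfold Rabs in H; destruct Rcase_abs in H; lra. Qed.

Lemma abs_bnd I x : (-x <= I <= x) \/ (x <= I <= -x) -> Rabs I <= Rabs x.
Proof. intro H. unfold Rabs; destruct Rcase_abs; destruct Rcase_abs; lra. Qed.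

Lemma ibp_mono (Q Q' S S' : R -> R) u v : u <= v ->
  (forall t, u <= t <= v -> is_derive Q t (Q' t)) ->
  (forall t, u <= t <= v -> is_derive S t (S' t)) ->
  (forall t, u <= t <= v -> continuous Q' t) ->
  (forall t, u <= t <= v -> continuous S' t) ->
  (forall t, u <= t <= v -> Rabs (S t) <= 1) ->
  ((forall t, u <= t <= v -> 0 <= Q' t) \/ (forall t, u <= t <= v -> Q' t <= 0)) ->
  Rabs (RInt (fun t => Q t * S' t) u v) <= 2 * (Rabs (Q u) + Rabs (Q v)).
Proof. intros Huv DQ DS CQ CS HS Hsg.
  rewrite (ibp Q Q' S S' u v); auto.
  assert (MM : forall t, Rmin u v <= t <= Rmax u v -> u <= t <= v).
  { intros t; rewrite Rmin_left, Rmax_right by lra; auto. }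
  assert (CS0 : forall t, u <= t <= v -> continuous S t).
  { intros. apply (ex_derive_continuous S). eexists; apply DS; auto. }
  assert (Ex2 : ex_RInt (fun t => Q' t * S t) u v).
  { apply exRc. intros t Ht. apply MM in Ht. apply (continuous_mult Q' S); auto. }
  assert (Ex3 : ex_RInt Q' u v) by (apply exRc; intros t Ht; apply MM in Ht; auto).
  assert (Ex4 : ex_RInt (fun t => - Q' t) u v).
  { apply exRc. intros t Ht. apply MM in Ht. apply (continuous_opp Q'); auto. }
  assert (IQ : RInt Q' u v = Q v - Q u).
  { apply (is_RInt_unique (V:=R_CompleteNormedModule)). apply (is_RInt_derive Q Q'); intros t Ht; apply MM in Ht; auto. }
  assert (IQo : RInt (fun t => - Q' t) u v = - (Q v - Q u)).
  { rewrite <- IQ. apply (RInt_opp (V:=R_CompleteNormedModule) Q'); auto. }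
  assert (B : Rabs (RInt (fun t => Q' t * S t) u v) <= Rabs (Q v - Q u)).
  { destruct Hsg as [Hp|Hn].
    - assert (L1 := RInt_le (fun t => - Q' t) (fun t => Q' t * S t) u v Huv Ex4 Ex2).
      assert (L2 := RInt_le (fun t => Q' t * S t) Q' u v Huv Ex2 Ex3).
      rewrite IQo in L1. rewrite IQ in L2.
      assert (A1 : forall t, u < t < v -> - Q' t <= Q' t * S t).
      { intros t Ht. assert (W := HS t ltac:(lra)). assert (W2 := Hp t ltac:(lra)). apply Rabs_le_inv_W in W. nra. }
      assert (A2 : forall t, u < t < v -> Q' t * S t <= Q' t).
      { intros t Ht. assert (W := HS t ltac:(lra)). assert (W2 := Hp t ltac:(lra)). apply Rabs_le_inv_W in W. nra. }
      specialize (L1 A1). specialize (L2 A2). apply abs_bnd. lra.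
    - assert (L1 := RInt_le Q' (fun t => Q' t * S t) u v Huv Ex3 Ex2).
      assert (L2 := RInt_le (fun t => Q' t * S t) (fun t => - Q' t) u v Huv Ex2 Ex4).
      rewrite IQo in L2. rewrite IQ in L1.
      assert (A1 : forall t, u < t < v -> Q' t <= Q' t * S t).
      { intros t Ht. assert (W := HS t ltac:(lra)). assert (W2 := Hn t ltac:(lra)). apply Rabs_le_inv_W in W. nra. }
      assert (A2 : forall t, u < t < v -> Q' t * S t <= - Q' t).
      { intros t Ht. assert (W := HS t ltac:(lra)). assert (W2 := Hn t ltac:(lra)). apply Rabs_le_inv_W in W. nra. }
      specialize (L1 A1). specialize (L2 A2). apply abs_bnd. lra. }
  assert (Bu : Rabs (Q u * S u) <= Rabs (Q u)).
  { rewrite Rabs_mult. assert (W := HS u ltac:(lra)). assert (0 <= Rabs (Q u)) by apply Rabs_pos. nra. }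
  assert (Bv : Rabs (Q v * S v) <= Rabs (Q v)).
  { rewrite Rabs_mult. assert (W := HS v ltac:(lra)). assert (0 <= Rabs (Q v)) by apply Rabs_pos. nra. }
  assert (Rabs (Q v - Q u) <= Rabs (Q v) + Rabs (Q u)).
  { unfold Rminus. eapply Rle_trans. apply Rabs_triang. rewrite Rabs_Ropp. lra. }
  eapply Rle_trans. unfold Rminus. apply Rabs_triang. rewrite Rabs_Ropp.
  eapply Rle_trans. apply Rplus_le_compat_r. apply Rabs_triang. rewrite Rabs_Ropp. lra. Qed.

Lemma outer k m x0 l a b eps u v lam : 0 < k -> 0 < eps -> a <= u -> u <= v -> v <= b -> 0 < lam ->
  ((forall t, a <= t <= b -> 0 <= F2 m x0 t) \/ (forall t, a <= t <= b -> F2 m x0 t <= 0)) ->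
  (forall t, a <= t <= b -> Rabs (k * Dl k m x0 l t) <= 1/2) ->
  (forall t, u <= t <= v -> lam <= Rabs (Dl k m x0 l t)) ->
  Rabs (RInt (fun t => h_l k m x0 l t * cos (2 * PI * (Phi_l k m x0 l t / eps))) u v) <= 2 * eps / lam /\
  Rabs (RInt (fun t => h_l k m x0 l t * sin (2 * PI * (Phi_l k m x0 l t / eps))) u v) <= 2 * eps / lam.
Proof. intros Hk He Hau Huv Hvb Hl Hs H3 HL.
  pose proof PI_gt3 as Hpi.
  assert (Hpkl : 0 < PI * k * lam) by (apply Rmult_lt_0_compat; [apply Rmult_lt_0_compat|]; lra).
  assert (Hpk : 0 < PI * k) by (apply Rmult_lt_0_compat; lra).
  set (D := Dl k m x0 l). set (F := F2 m x0). set (ps := fun t => 2 * PI * (Phi_l k m x0 l t / eps)).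
  assert (HD0 : forall t, u <= t <= v -> D t <> 0).
  { intros t Ht H. specialize (HL t Ht). change (Dl k m x0 l t) with (D t) in HL. rewrite H, Rabs_R0 in HL. lra. }
  assert (Harg : forall t, a <= t <= b -> Rabs (PI * k * D t) <= PI / 2).
  { intros t Ht. specialize (H3 t Ht). change (Dl k m x0 l t) with (D t) in H3. rewrite !Rabs_mult in *. 
    rewrite (Rabs_right PI) by lra. rewrite (Rabs_right k) in * by lra. 
    assert (0 <= Rabs (D t)) by apply Rabs_pos. nra. }
  assert (Hsin : forall t, u <= t <= v -> PI * k * lam / 2 <= Rabs (sin (PI * k * D t))).
  { intros t Ht. assert (W := T2 _ (Harg t ltac:(lra))). rewrite !Rabs_mult, (Rabs_right PI), (Rabs_right k) in W by lra.
    specialize (HL t Ht). change (Dl k m x0 l t) with (D t) in HL.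
    assert (0 <= PI * k * (Rabs (D t) - lam)) by (apply Rmult_le_pos; nra). nra. }
  assert (Hsn : forall t, u <= t <= v -> sin (PI * k * D t) <> 0).
  { intros t Ht H. specialize (Hsin t Ht). rewrite H, Rabs_R0 in Hsin. lra. }
  set (Q := fun t => eps * k / (2 * sin (PI * k * D t))).
  set (Q' := fun t => - (eps * k * PI * k) * (F t * cos (PI * k * D t)) / (2 * (sin (PI * k * D t))^2)).
  assert (DQ : forall t, u <= t <= v -> is_derive Q t (Q' t)).
  { intros t Ht. specialize (Hsn t Ht). unfold Q, Q', D, F in *. unfold Dl, P1, F2 in *. auto_derive.
    { intro H; apply Hsn; unfold Rminus; lra. } unfold Rminus in *. field. exact Hsn. }
  assert (CQ : forall t, u <= t <= v -> continuous Q' t).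
  { intros t Ht. specialize (Hsn t Ht). apply (ex_derive_continuous Q'). unfold Q', D, F in *. unfold Dl, P1, F2 in *. auto_derive.
    unfold Rminus in *. rewrite Rmult_1_r. intro H. apply Rmult_integral in H. destruct H as [H|H]. lra. apply Rmult_integral in H. destruct H; auto. }
  assert (QB : forall t, u <= t <= v -> Rabs (Q t) <= eps / (PI * lam)).
  { intros t Ht. specialize (Hsin t Ht). specialize (Hsn t Ht).
    assert (E : Rabs (Q t) = eps * k / (2 * Rabs (sin (PI * k * D t)))).
    { unfold Q. unfold Rdiv. rewrite !Rabs_mult, Rabs_inv, !Rabs_mult.
      rewrite (Rabs_right eps), (Rabs_right k), (Rabs_right 2) by lra. reflexivity. }
    rewrite E. unfold Rdiv. apply Rle_trans with (eps * k * / (PI * k * lam)).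
    apply Rmult_le_compat_l. nra. apply Rinv_le_contravar. lra. lra.
    right. field. repeat split; lra. }
  assert (Qsg : (forall t, u <= t <= v -> 0 <= Q' t) \/ (forall t, u <= t <= v -> Q' t <= 0)).
  { assert (Hc : forall t, u <= t <= v -> 0 <= cos (PI * k * D t)).
    { intros t Ht. specialize (Harg t ltac:(lra)). apply Rabs_le_inv_W in Harg. apply cos_ge_0; lra. }
    assert (Hq : forall t, u <= t <= v -> Q' t = - ((eps * k * PI * k) / (2 * (sin (PI * k * D t))^2)) * (F t * cos (PI * k * D t))).
    { intros t Ht. specialize (Hsn t Ht). unfold Q'. field. auto. }
    assert (Hp : forall t, u <= t <= v -> 0 < (eps * k * PI * k) / (2 * (sin (PI * k * D t))^2)).
    { intros t Ht. specialize (Hsn t Ht). apply Rdiv_lt_0_compat. apply Rmult_lt_0_compat; [|lra]. apply Rmult_lt_0_compat; [|lra]. apply Rmult_lt_0_compat; lra.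
      assert (0 < sin (PI * k * D t) ^ 2) by (apply pow2_gt_0; auto). lra. }
    destruct Hs as [Hs|Hs]; [right|left]; intros t Ht; rewrite (Hq t Ht);
      specialize (Hp t Ht); specialize (Hs t ltac:(lra)); specialize (Hc t Ht); change (F2 m x0 t) with (F t) in Hs.
    - assert (0 <= F t * cos (PI * k * D t)) by (apply Rmult_le_pos; auto). nra.
    - assert (0 <= - F t * cos (PI * k * D t)) by (apply Rmult_le_pos; lra). nra. }
  assert (Dps : forall t, is_derive ps t (2 * PI * (D t / eps))).
  { intro t. unfold ps, D, Phi_l, Phi, dotdir, Dl, P1. auto_derive. auto. field. lra. }
  assert (CD : forall t, continuous D t).
  { intro t. apply (ex_derive_continuous D). eexists. apply is_derive_Dl. }
  assert (Cps' : forall t, continuous (fun t => 2 * PI * (D t / eps)) t).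
  { intro t. apply (continuous_comp D (fun x => 2 * PI * (x / eps))). auto.
    apply (ex_derive_continuous (fun x => 2 * PI * (x / eps))). auto_derive. auto. }
  assert (Cps : forall t, continuous ps t).
  { intro t. apply (ex_derive_continuous ps). eexists. apply Dps. }
  assert (hh : forall t, u <= t <= v -> h_l k m x0 l t = PI * k * D t / sin (PI * k * D t)).
  { intros t Ht. rewrite h_eq by lra. unfold Hf. fold D. destruct Req_EM_T as [E|E]; auto.
    exfalso. apply Rmult_integral in E. destruct E as [E|E]. nra. apply (HD0 t Ht E). }
  assert (MM : forall t, Rmin u v < t < Rmax u v -> u <= t <= v).
  { intros t; rewrite Rmin_left, Rmax_right by lra; lra. }
  split.
  - set (S := fun t => sin (ps t)). set (S' := fun t => cos (ps t) * (2 * PI * (D t / eps))).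
    rewrite (RIext _ (fun t => Q t * S' t)).
    2:{ intros t Ht. apply MM in Ht. rewrite hh by auto. unfold Q, S'. fold (ps t). field. split; auto. lra. }
    eapply Rle_trans. apply (ibp_mono Q Q' S S'); auto.
    + intros t _. unfold S, S'.
      replace (cos (ps t) * (2 * PI * (D t / eps))) with (scal (2 * PI * (D t / eps)) (cos (ps t))) by (unfold scal; simpl; unfold mult; simpl; ring).
      apply (is_derive_comp sin ps). auto_derive; auto. ring. apply Dps.
    + intros t _. unfold S'. apply (continuous_mult (fun t => cos (ps t)) (fun t => 2 * PI * (D t / eps))); auto.
      apply (continuous_comp ps cos); auto. apply (ex_derive_continuous cos). auto_derive; auto.
    + intros t _. unfold S. apply Rabs_le. apply SIN_bound.
    + pose proof (QB u ltac:(lra)). pose proof (QB v ltac:(lra)).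
      replace (2 * eps / lam) with (2 * (eps / lam)) by (field; lra).
      assert (eps / (PI * lam) <= eps / lam / 2).
      { unfold Rdiv. rewrite Rinv_mult. assert (0 < / lam) by (apply Rinv_0_lt_compat; lra).
        assert (/ PI <= / 2) by (apply Rinv_le_contravar; lra).
        replace (eps * (/ PI * / lam)) with ((eps * / lam) * / PI) by ring.
        apply Rmult_le_compat_l. apply Rmult_le_pos; lra. lra. }
      lra.
  - set (S := fun t => cos (ps t)). set (S' := fun t => - sin (ps t) * (2 * PI * (D t / eps))).
    set (Q2 := fun t => - Q t). set (Q2' := fun t => - Q' t).
    rewrite (RIext _ (fun t => Q2 t * S' t)).
    2:{ intros t Ht. apply MM in Ht. rewrite hh by auto. unfold Q2, Q, S'. fold (ps t). field. split; auto. lra. }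
    eapply Rle_trans. apply (ibp_mono Q2 Q2' S S'); auto.
    + intros t Ht. unfold Q2, Q2'. apply (is_derive_opp Q). auto.
    + intros t _. unfold S, S'.
      replace (- sin (ps t) * (2 * PI * (D t / eps))) with (scal (2 * PI * (D t / eps)) (- sin (ps t))) by (unfold scal; simpl; unfold mult; simpl; ring).
      apply (is_derive_comp cos ps). auto_derive; auto. ring. apply Dps.
    + intros t Ht. unfold Q2'. apply (continuous_opp Q'); auto.
    + intros t _. unfold S'. apply (continuous_mult (fun t => - sin (ps t)) (fun t => 2 * PI * (D t / eps))); auto.
      apply (continuous_comp ps (fun x => - sin x)); auto. apply (ex_derive_continuous (fun x => - sin x)). auto_derive; auto.
    + intros t _. unfold S. apply Rabs_le. apply COS_bound.
    + destruct Qsg as [Hq|Hq]; [right|left]; intros t Ht; unfold Q2'; specialize (Hq t Ht); lra.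
    + pose proof (QB u ltac:(lra)). pose proof (QB v ltac:(lra)). unfold Q2. rewrite !Rabs_Ropp.
      replace (2 * eps / lam) with (2 * (eps / lam)) by (field; lra).
      assert (eps / (PI * lam) <= eps / lam / 2).
      { unfold Rdiv. rewrite Rinv_mult. assert (0 < / lam) by (apply Rinv_0_lt_compat; lra).
        assert (/ PI <= / 2) by (apply Rinv_le_contravar; lra).
        replace (eps * (/ PI * / lam)) with ((eps * / lam) * / PI) by ring.
        apply Rmult_le_compat_l. apply Rmult_le_pos; lra. lra. }
      lra.
Qed.

Lemma chas (f : R -> R) a b c : ex_RInt f a b -> ex_RInt f b c -> RInt f a c = RInt f a b + RInt f b c.
Proof. intros H1 H2. rewrite <- (RInt_Chasles (V:=R_CompleteNormedModule) f a b c); auto. Qed.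

Lemma comb (f : R -> R) a b al0 dl eps t : 0 < dl -> 0 < eps -> a <= t <= b ->
  (forall x, a <= x <= b -> continuous f x) ->
  (forall p q, a <= p -> p <= q -> q <= b -> Rabs (RInt f p q) <= 2 * (q - p)) ->
  (forall u v lam, a <= u -> u <= v -> v <= b -> 0 < lam ->
      (forall s, u <= s <= v -> lam <= dl * Rabs (s - al0) / 4) -> Rabs (RInt f u v) <= 2 * eps / lam) ->
  Rabs (RInt f t b) <= 20 * sqrt (eps / dl).
Proof. intros Hdl He Ht Hc Hcen Hout.
  set (rho := sqrt (eps / dl)).
  assert (Hr : 0 < rho) by (apply sqrt_lt_R0; apply Rdiv_lt_0_compat; lra).
  assert (Hr2 : rho * rho = eps / dl) by (apply sqrt_sqrt; apply Rlt_le; apply Rdiv_lt_0_compat; lra).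
  assert (Heps : eps = dl * rho * rho) by (rewrite Rmult_assoc, Hr2; field; lra).
  set (p := Rmax t (Rmin b (al0 - rho))). set (q := Rmax p (Rmin b (al0 + rho))).
  assert (Hp : t <= p <= b /\ (p = t \/ p <= al0 - rho)) by (unfold p, Rmax, Rmin; repeat destruct Rle_dec; lra).
  assert (Hq : p <= q <= b /\ (q = p \/ (al0 - rho <= p /\ q <= al0 + rho)) /\ (q = b \/ al0 + rho <= q)).
  { unfold q, p, Rmax, Rmin in *; repeat destruct Rle_dec; lra. }
  assert (Ex : forall u v, a <= u -> u <= v -> v <= b -> ex_RInt f u v).
  { intros u v H1 H2 H3. apply exRc. intros z Hz. rewrite Rmin_left, Rmax_right in Hz by lra. apply Hc. lra. }
  rewrite (chas f t p b) by (apply Ex; lra). rewrite (chas f p q b) by (apply Ex; lra).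
  assert (Olam : 2 * eps / (dl * rho / 4) = 8 * rho) by (rewrite Heps; field; lra).
  assert (Hlam : 0 < dl * rho / 4) by (apply Rmult_lt_0_compat; [apply Rmult_lt_0_compat|]; lra).
  assert (B1 : Rabs (RInt f t p) <= 8 * rho).
  { destruct Hp as [Hp1 [Hp2|Hp2]].
    - rewrite Hp2, RInt_point. unfold zero; simpl. rewrite Rabs_R0. lra.
    - rewrite <- Olam. apply Hout; try lra. intros s Hs. rewrite Rabs_left1 by lra.
      apply Rmult_le_compat_r. lra. apply Rmult_le_compat_l; lra. }
  assert (B2 : Rabs (RInt f p q) <= 4 * rho).
  { eapply Rle_trans. apply Hcen; lra. destruct Hq as [_ [[E|[E1 E2]] _]]; lra. }
  assert (B3 : Rabs (RInt f q b) <= 8 * rho).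
  { destruct Hq as [Hq1 [_ [Hq2|Hq2]]].
    - rewrite Hq2, RInt_point. unfold zero; simpl. rewrite Rabs_R0. lra.
    - rewrite <- Olam. apply Hout; try lra. intros s Hs. rewrite Rabs_right by lra.
      apply Rmult_le_compat_r. lra. apply Rmult_le_compat_l; lra. }
  eapply Rle_trans. apply Rabs_triang. eapply Rle_trans. apply Rplus_le_compat_l. apply Rabs_triang.
  fold rho. lra. Qed.

Lemma cmod_le x y : Cmod (x, y) <= Rabs x + Rabs y.
Proof. unfold Cmod; cbn [fst snd].
  assert (0 <= Rabs x) by apply Rabs_pos. assert (0 <= Rabs y) by apply Rabs_pos.
  rewrite <- (sqrt_pow2 (Rabs x + Rabs y)) by lra. apply sqrt_le_1_alt.
  rewrite <- (pow2_abs x), <- (pow2_abs y). nra. Qed.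

Theorem mainTheorem10 (kappa : R) (x0 : R * R) (hkappa : 0 < kappa) :
  exists c : R,
  forall (m : Z) (a b : R) (l : Z) (g g' : R -> R) (alpha0 : R),
    m <> 0%Z ->
    -PI <= a -> a <= b -> b <= PI ->
    C1_on_with g g' a b ->
    (forall alpha, a < alpha < b -> Derive (Derive (Phi m x0)) alpha <> 0) ->
    a <= alpha0 <= b ->
    kappa * Derive (Phi m x0) alpha0 = IZR l ->
    Derive (Derive (Phi m x0)) alpha0 <> 0 ->
    (forall alpha, a <= alpha <= b -> Rabs (kappa * Derive (Phi m x0) alpha - IZR l) <= 1/2) ->
    forall eps : R, 0 < eps ->
    forall M : R, (forall alpha, a <= alpha <= b -> Rabs (g alpha) <= M) ->
      Cmod (CInt (fun alpha =>
                    Cmult (RtoC (g alpha * h_l kappa m x0 l alpha))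
                          (e (Phi_l kappa m x0 l alpha / eps))) a b)
      <= c * sqrt eps * (M + RInt (fun alpha => Rabs (g' alpha)) a b)
           * / sqrt (Rabs (Derive (Derive (Phi m x0)) alpha0)).
Proof.
  exists 40. intros m a b l g g' al0 Hm Ha Hab Hb HC HF Hal0 Hl HF0 H3 eps He M HM.
  set (k := kappa) in *.
  rewrite ddPhi in *. rewrite dPhi in Hl.
  assert (HF' : forall t, a < t < b -> F2 m x0 t <> 0) by (intros; rewrite <- ddPhi; auto).
  assert (H3' : forall t, a <= t <= b -> Rabs (k * Dl k m x0 l t) <= 1/2).
  { intros t Ht. specialize (H3 t Ht). rewrite dPhi in H3. unfold Dl.
    replace (k * (P1 m x0 t - IZR l / k)) with (k * P1 m x0 t - IZR l) by (field; lra). auto. }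
  set (dl := Rabs (F2 m x0 al0)).
  assert (Hdl : 0 < dl) by (apply Rabs_pos_lt; auto).
  assert (HM0 : 0 <= M) by (eapply Rle_trans; [apply Rabs_pos|apply (HM a); lra]).
  assert (Hsq : 0 < sqrt dl) by (apply sqrt_lt_R0; auto).
  assert (Hse : 0 <= sqrt eps) by apply sqrt_pos.
  destruct (Rle_lt_or_eq_dec a b Hab) as [Hlt|Heq].
  2:{ subst b. unfold CInt. rewrite !RInt_point. unfold zero; simpl.
      replace (0, 0) with (RtoC 0) by reflexivity. rewrite Cmod_0.
      apply Rmult_le_pos. apply Rmult_le_pos. apply Rmult_le_pos; lra. lra.
      left; apply Rinv_0_lt_compat; auto. }
  assert (Hs := sign_const m x0 a b HF').
  set (fc := fun t => h_l k m x0 l t * cos (2 * PI * (Phi_l k m x0 l t / eps))).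
  set (fs := fun t => h_l k m x0 l t * sin (2 * PI * (Phi_l k m x0 l t / eps))).
  assert (Harg : forall t, a <= t <= b -> Rabs (PI * k * Dl k m x0 l t) <= PI / 2).
  { intros t Ht. specialize (H3' t Ht). rewrite !Rabs_mult in *. pose proof PI_gt3.
    rewrite (Rabs_right PI) by lra. rewrite (Rabs_right k) in * by lra.
    assert (0 <= Rabs (Dl k m x0 l t)) by apply Rabs_pos. nra. }
  assert (Chf : forall t, a <= t <= b -> continuous (h_l k m x0 l) t).
  { intros t Ht. apply (continuous_ext (fun t => Hf (PI * k * Dl k m x0 l t))).
    intro; rewrite h_eq; auto.
    apply (continuous_comp (fun t => PI * k * Dl k m x0 l t) Hf).
    apply (ex_derive_continuous (fun t => PI * k * Dl k m x0 l t)). unfold Dl, P1. auto_derive. auto.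
    apply Hf_cont. specialize (Harg t Ht). pose proof PI_gt3. lra. }
  assert (Cph : forall t, continuous (fun t => 2 * PI * (Phi_l k m x0 l t / eps)) t).
  { intro t. apply (ex_derive_continuous (fun t => 2 * PI * (Phi_l k m x0 l t / eps))).
    unfold Phi_l, Phi, dotdir. auto_derive. auto. }
  assert (Cc : forall t, a <= t <= b -> continuous fc t).
  { intros t Ht. apply (continuous_mult (h_l k m x0 l) (fun t => cos (2 * PI * (Phi_l k m x0 l t / eps)))). auto.
    apply (continuous_comp (fun t => 2 * PI * (Phi_l k m x0 l t / eps)) cos). auto.
    apply (ex_derive_continuous cos). auto_derive; auto. }
  assert (Cs : forall t, a <= t <= b -> continuous fs t).
  { intros t Ht. apply (continuous_mult (h_l k m x0 l) (fun t => sin (2 * PI * (Phi_l k m x0 l t / eps)))). auto.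
    apply (continuous_comp (fun t => 2 * PI * (Phi_l k m x0 l t / eps)) sin). auto.
    apply (ex_derive_continuous sin). auto_derive; auto. }
  assert (hb : forall t, a <= t <= b -> Rabs (h_l k m x0 l t) <= 2).
  { intros t Ht. rewrite h_eq by auto. apply Hf_bound. auto. }
  assert (Low := Dl_lower k m x0 l a b al0 hkappa Ha Hb Hs Hal0 Hl HF0).
  assert (Kc : forall t, a <= t <= b -> Rabs (RInt fc t b) <= 20 * sqrt (eps / dl)).
  { intros t Ht. apply (comb fc a b al0 dl eps t); auto.
    - intros p q H1 H2 H4. rewrite Rmult_comm. apply abs_RInt_le_const; auto.
      apply exRc. intros z Hz. rewrite Rmin_left, Rmax_right in Hz by lra. apply Cc; lra.
      intros s Hs'. unfold fc. rewrite Rabs_mult. specialize (hb s ltac:(lra)).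
      assert (W := COS_bound (2 * PI * (Phi_l k m x0 l s / eps))). apply Rabs_le in W.
      assert (0 <= Rabs (h_l k m x0 l s)) by apply Rabs_pos. assert (0 <= Rabs (cos (2 * PI * (Phi_l k m x0 l s / eps)))) by apply Rabs_pos. nra.
    - intros u v lam H1 H2 H4 H5 H6. apply (outer k m x0 l a b eps u v lam); auto.
      intros s Hs'. apply Rle_trans with (dl * Rabs (s - al0) / 4). apply H6; auto. apply Low. lra. }
  assert (Ks : forall t, a <= t <= b -> Rabs (RInt fs t b) <= 20 * sqrt (eps / dl)).
  { intros t Ht. apply (comb fs a b al0 dl eps t); auto.
    - intros p q H1 H2 H4. rewrite Rmult_comm. apply abs_RInt_le_const; auto.
      apply exRc. intros z Hz. rewrite Rmin_left, Rmax_right in Hz by lra. apply Cs; lra.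
      intros s Hs'. unfold fs. rewrite Rabs_mult. specialize (hb s ltac:(lra)).
      assert (W := SIN_bound (2 * PI * (Phi_l k m x0 l s / eps))). apply Rabs_le in W.
      assert (0 <= Rabs (h_l k m x0 l s)) by apply Rabs_pos. assert (0 <= Rabs (sin (2 * PI * (Phi_l k m x0 l s / eps)))) by apply Rabs_pos. nra.
    - intros u v lam H1 H2 H4 H5 H6. apply (outer k m x0 l a b eps u v lam); auto.
      intros s Hs'. apply Rle_trans with (dl * Rabs (s - al0) / 4). apply H6; auto. apply Low. lra. }
  assert (Ic := ibp_bound a b g g' fc _ M Hlt HC Cc HM Kc).
  assert (Is := ibp_bound a b g g' fs _ M Hlt HC Cs HM Ks).
  unfold CInt.
  rewrite (RIext _ (fun t => g t * fc t)).
  2:{ intros x Hx. unfold fc, e. simpl. ring. }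
  rewrite (RIext (fun t => snd _) (fun t => g t * fs t)).
  2:{ intros x Hx. unfold fs, e. simpl. ring. }
  eapply Rle_trans. apply cmod_le.
  rewrite sqrt_div in * by lra. fold dl.
  unfold Rdiv in *. lra. Qed.
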